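(* Let $L\ge 1$ and let $T_L = T^{(L)}\circ T^{(L-1)}\circ\cdots\circ T^{(1)}$ be an $L$-layer Transformer, each layer $T^{(\ell)}$ being a Transformer layer as described in the context and being Lipschitz continuous with respect to its input with constant $\lVert\nabla T^{(\ell)}\rVert$. Fix $k\ge 0$, prefix vectors $\mathbf{v}_1,\dots,\mathbf{v}_k\in\mathbb{R}^d$ and a vector $\mathbf{v}\in\mathbb{R}^d$ (all from a finite vocabulary of token vectors). For $n\ge1$ let $S_n=(\mathbf{v}_1,\dots,\mathbf{v}_k,\underbrace{\mathbf{v},\dots,\mathbf{v}}_{n\text{ times}})$ (length $n+k$) and $S^*=(\mathbf{v})$. Then $$\lim_{n\to\infty}\left\lVert T_L(S_n)_{n+k} - T_L(S^* )_1\right\rVert = 0.$$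
   Context: Model. Tokens are represented by vectors in $\mathbb{R}^d$ drawn from a finite vocabulary. A (decoder, causally masked) Transformer layer $T^{(\ell)}$ maps an input sequence $S=(\mathbf{v}_1,\dots,\mathbf{v}_m)$ to $T^{(\ell)}(S)=(\mathbf{v}'_1,\dots,\mathbf{v}'_m)$ with $$\mathbf{z}_i=\sum_{j\le i}\alpha_{i,j}\mathbf{v}_j+\mathbf{v}_i,\qquad \mathbf{v}'_i=\psi_\ell(\mathbf{z}_i)+\mathbf{z}_i,$$ where $\psi_\ell:\mathbb{R}^d\to\mathbb{R}^d$ is a Lipschitz continuous MLP and $\alpha_{i,j}=\exp(s_{i,j})/\sum_{j'\le i}\exp(s_{i,j'})$ for $j\le i$, with scores $s_{i,j}$ computed from queries and keys of tokens $i,j$ (possibly with a bounded positional encoding, such as RoPE, acting only on queries and keys). Standing assumption: at every layer there is a constant $\delta$, independent of the sequence and its length, with $|s_{i,j}-s_{i,j'}|\le\delta$ for all $i$ and $j,j'\le i$, so $\alpha_{i,j}\le e^{\delta}/i$. $T^{(\ell)}$ denotes the $\ell$-th layer, $T_\ell=T^{(\ell)}\circ\cdots\circ T^{(1)}$ the composition of the first $\ell$ layers, $T(S)_i$ the $i$-th element of the output sequence, and $\lVert\cdot\rVert$ the Euclidean norm. *)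

(* Defs.v *)
From HB Require Import structures.
From mathcomp Require Import all_boot all_order all_algebra.
From mathcomp Require Import all_classical all_reals all_analysis.
Set Implicit Arguments. Unset Strict Implicit. Unset Printing Implicit Defensive.
Import Order.TTheory GRing.Theory Num.Theory.
Local Open Scope ring_scope.

Definition enorm {R : realType} {d : nat} (v : 'rV[R]_d) : R :=
  Num.sqrt (\sum_(i < d) (v 0 i) ^+ 2).

Definition seq_enorm {R : realType} {d : nat} (S : seq 'rV[R]_d) : R :=
  Num.sqrt (\sum_(x <- S) (enorm x) ^+ 2).

(* Score function of an attention layer: [sc i j q k] is the score s_{i,j}
   for query position i and key position j (1-based) with query token q and
   key token k.  Positions are arguments so that bounded positional encodings
   (e.g. RoPE) acting on queries and keys are covered. *)
Definition score (R : realType) (d : nat) := nat -> nat -> 'rV[R]_d -> 'rV[R]_d -> R.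

Definition tlayer {R : realType} {d : nat} (psi : 'rV[R]_d -> 'rV[R]_d)
  (sc : score R d) (S : seq 'rV[R]_d) : seq 'rV[R]_d :=
  mkseq (fun i0 =>
    let i := i0.+1 in
    let vi := nth 0 S i0 in
    let den := \sum_(j < i) expR (sc i j.+1 vi (nth 0 S j)) in
    let z := \sum_(j < i) (expR (sc i j.+1 vi (nth 0 S j)) / den) *: nth 0 S j + vi in
    psi z + z) (size S).

(* T_L = T^(L) o ... o T^(1); layer l (1-based) uses psi (l-1), sc (l-1). *)
Fixpoint transformer {R : realType} {d : nat} (psi : nat -> 'rV[R]_d -> 'rV[R]_d)
  (sc : nat -> score R d) (L : nat) (S : seq 'rV[R]_d) : seq 'rV[R]_d :=
  match L with
  | 0 => S
  | L'.+1 => tlayer (psi L') (sc L') (transformer psi sc L' S)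
  end.

Definition lipschitz_map {R : realType} {d : nat} (f : 'rV[R]_d -> 'rV[R]_d) : Prop :=
  exists C : R, forall x y, enorm (f x - f y) <= C * enorm (x - y).

Definition bounded_scores {R : realType} {d : nat} (sc : score R d) : Prop :=
  exists delta : R, forall (S : nat -> 'rV[R]_d) (i j j' : nat),
    (1 <= j <= i)%N -> (1 <= j' <= i)%N ->
    `| sc i j (S i) (S j) - sc i j' (S i) (S j') | <= delta.

Definition layer_lipschitz {R : realType} {d : nat} (T : seq 'rV[R]_d -> seq 'rV[R]_d) : Prop :=
  exists C : R, forall S S' : seq 'rV[R]_d, size S = size S' ->
    seq_enorm [seq x.1 - x.2 | x <- zip (T S) (T S')]
      <= C * seq_enorm [seq x.1 - x.2 | x <- zip S S'].

(* Main.v *)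
Require Import Defs.
From HB Require Import structures.
From mathcomp Require Import all_boot all_order all_algebra.
From mathcomp Require Import all_classical all_reals all_analysis.
From mathcomp Require Import zify lra.
Import Order.TTheory GRing.Theory Num.Theory.
Import numFieldNormedType.Exports.
Local Open Scope ring_scope.
Local Open Scope classical_set_scope.

Set Implicit Arguments.
Section H.
Variables (R : realType) (d : nat).
Implicit Types x y : 'rV[R]_d.

Lemma enorm_coord x i : `|x 0 i| <= enorm x.
Proof.
rewrite /enorm -sqrtr_sqr ler_sqrt ?sumr_ge0 // => [|j _]; last exact: sqr_ge0.
by rewrite (bigD1 i) //= lerDl sumr_ge0 // => j _; exact: sqr_ge0.
Qed.

Lemma enorm_le_sum x : enorm x <= \sum_i `|x 0 i|.
Proof.
have S0 : 0 <= \sum_i `|x 0 i| by apply: sumr_ge0.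
rewrite /enorm -(ger0_norm S0) -sqrtr_sqr ler_sqrt; last exact: sqr_ge0.
rewrite expr2 mulr_sumr; apply: ler_sum => i _.
rewrite -real_normK ?num_real // expr2; apply: ler_wpM2r => //.
by rewrite (bigD1 i) //= lerDl sumr_ge0.
Qed.

Lemma att_bound (N : nat) (e y : 'I_N -> R) (c E : R) :
  (0 < N)%N -> (forall j, 0 < e j) -> (forall j j', e j <= E * e j') ->
  `|\sum_j (e j / \sum_j' e j') * y j - c| <= E / N%:R * \sum_j `|y j - c|.
Proof.
move=> N0 e0 eE.
set den := \sum_j' e j'.
have den0 : 0 < den.
  rewrite /den (bigD1 (Ordinal N0)) //= ltr_pwDl // ?e0 // sumr_ge0 // => j _.
  exact: ltW.
have s1 : \sum_j (e j / den) = 1 by rewrite -mulr_suml divff // gt_eqF.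
have -> : \sum_j (e j / den) * y j - c = \sum_j (e j / den) * (y j - c).
  by rewrite -[c in LHS]mul1r -s1 mulr_suml -sumrB; apply: eq_bigr => j _; rewrite mulrBr.
rewrite (le_trans (ler_norm_sum _ _ _)) // mulr_sumr; apply: ler_sum => j _.
rewrite normrM; apply: ler_wpM2r => //; rewrite ger0_norm; last by rewrite divr_ge0 // ltW.
rewrite ler_pdivrMr // mulrAC ler_pdivlMr ?ltr0n //.
have -> : e j * N%:R = \sum_(j0 < N) e j by rewrite sumr_const card_ord mulr_natr.
rewrite /den mulr_sumr; apply: ler_sum => j' _; exact: eE.
Qed.

Definition cv (a : nat -> 'rV[R]_d) (w : 'rV[R]_d) :=
  forall i, (fun n => a n 0 i) @ \oo --> w 0 i.

Lemma coord_to0 (a : nat -> 'rV[R]_d) w i : cv a w ->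
  (fun n => `|a n 0 i - w 0 i|) @ \oo --> (0:R).
Proof.
move=> H; apply/(norm_cvg0P (fun n => a n 0 i - w 0 i)).
exact/(subr_cvg0 (fun n => a n 0 i)).
Qed.

Lemma cv_enorm (a : nat -> 'rV[R]_d) w : cv a w ->
  (fun n => enorm (a n - w)) @ \oo --> (0:R).
Proof.
move=> H.
apply: (@squeeze_cvgr _ _ _ _ (fun=> 0) (fun n => \sum_i `|a n 0 i - w 0 i|)).
- apply: nearW => n; apply/andP; split.
    by rewrite /enorm sqrtr_ge0.
  apply: le_trans (enorm_le_sum _) _; apply: ler_sum => i _; by rewrite !mxE.
- exact: cvg_cst.
- have HH := @cvg_big R _ +%R 0 xpredT add_continuous _ _ (index_enum (ordinal d)) (fun i n => `|a n 0 i - w 0 i|) (fun=> 0) _ (fun i _ => @coord_to0 a w i H).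
  have HH2 := HH (filter_on_Filter _) . rewrite big1 // in HH2.
Qed.

Lemma cv_lip (f : 'rV[R]_d -> 'rV[R]_d) (a : nat -> 'rV[R]_d) w :
  lipschitz_map f -> cv a w -> cv (fun n => f (a n)) (f w).
Proof.
move=> [C HC] H i.
have h := @cv_enorm a w H.
apply/(subr_cvg0 (fun n => f (a n) 0 i)).
apply/(norm_cvg0P (fun n => f (a n) 0 i - f w 0 i)).
apply: (@squeeze_cvgr _ _ _ _ (fun=> 0) (fun n => C * enorm (a n - w))).
- apply: nearW => n; apply/andP; split => //.
  apply: le_trans (HC _ _).
  by have := enorm_coord (f (a n) - f w) i; rewrite !mxE.
- exact: cvg_cst.
- rewrite -(mulr0 C); exact: (cvgM (cvg_cst C) h).
Qed.


Definition zof (sc : score R d) (S : seq 'rV[R]_d) (p : nat) : 'rV[R]_d :=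
  \sum_(j < p.+1) (expR (sc p.+1 j.+1 (nth 0 S p) (nth 0 S j)) /
     \sum_(j' < p.+1) expR (sc p.+1 j'.+1 (nth 0 S p) (nth 0 S j'))) *: nth 0 S j
  + nth 0 S p.

Lemma size_tlayer psi sc (S : seq 'rV[R]_d) : size (tlayer psi sc S) = size S.
Proof. by rewrite size_mkseq. Qed.

Lemma nth_tlayer psi sc (S : seq 'rV[R]_d) p : (p < size S)%N ->
  nth 0 (tlayer psi sc S) p = psi (zof sc S p) + zof sc S p.
Proof. by move=> hp; rewrite /tlayer nth_mkseq. Qed.

Lemma zof_eq sc (S S' : seq 'rV[R]_d) p :
  (forall j, (j <= p)%N -> nth 0 S j = nth 0 S' j) -> zof sc S p = zof sc S' p.
Proof.
move=> H; rewrite /zof (H p (leqnn p)).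
have D : \sum_(j' < p.+1) expR (sc p.+1 j'.+1 (nth 0 S' p) (nth 0 S j')) =
         \sum_(j' < p.+1) expR (sc p.+1 j'.+1 (nth 0 S' p) (nth 0 S' j')).
  by apply: eq_bigr => j _; rewrite H // -ltnS.
rewrite D; congr (_ + _); apply: eq_bigr => j _; rewrite H // -ltnS //.
Qed.

Lemma tlayer_causal psi sc (S S' : seq 'rV[R]_d) q :
  (q <= size S)%N -> (q <= size S')%N ->
  (forall j, (j < q)%N -> nth 0 S j = nth 0 S' j) ->
  forall p, (p < q)%N -> nth 0 (tlayer psi sc S) p = nth 0 (tlayer psi sc S') p.
Proof.
move=> hS hS' H p hp.
rewrite !nth_tlayer ?(leq_trans hp) // (@zof_eq sc S S' p) // => j hj.
by apply: H; apply: leq_ltn_trans hj hp.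
Qed.

Lemma size_transformer psi sc l (S : seq 'rV[R]_d) :
  size (transformer psi sc l S) = size S.
Proof. by elim: l => //= l IH; rewrite size_tlayer. Qed.

Lemma transformer_causal psi sc l (S S' : seq 'rV[R]_d) q :
  (q <= size S)%N -> (q <= size S')%N ->
  (forall j, (j < q)%N -> nth 0 S j = nth 0 S' j) ->
  forall p, (p < q)%N ->
  nth 0 (transformer psi sc l S) p = nth 0 (transformer psi sc l S') p.
Proof.
move=> hS hS' H; elim: l => //= l IH.
by apply: tlayer_causal; rewrite ?size_transformer.
Qed.

Lemma W_step psi sc l (v : 'rV[R]_d) :
  let w := nth 0 (transformer psi sc l [:: v]) 0 in
  nth 0 (transformer psi sc l.+1 [:: v]) 0 = psi l (w + w) + (w + w).
Proof.
move=> w /=; rewrite nth_tlayer ?size_transformer //.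
suff -> : zof (sc l) (transformer psi sc l [:: v]) 0 = w + w by [].
by rewrite /zof !big_ord1 divff ?scale1r // gt_eqF // expR_gt0.
Qed.

End H.
Unset Implicit Arguments.
Arguments cv {R d}. Arguments coord_to0 {R d}. Arguments cv_enorm {R d}. Arguments cv_lip {R d}. Arguments W_step {R d}. Arguments zof {R d}.

Theorem theorem2 (R : realType) (d L : nat)
  (psi : nat -> 'rV[R]_d -> 'rV[R]_d) (sc : nat -> score R d)
  (prefix : seq 'rV[R]_d) (v : 'rV[R]_d) :
  (1 <= L)%N ->
  (forall l, (l < L)%N -> lipschitz_map (psi l)) ->
  (forall l, (l < L)%N -> bounded_scores (sc l)) ->
  (forall l, (l < L)%N -> layer_lipschitz (tlayer (psi l) (sc l))) ->
  (fun n : nat =>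
     enorm (nth 0 (transformer psi sc L (prefix ++ nseq n v)) (n + size prefix).-1
            - nth 0 (transformer psi sc L [:: v]) 0))
    @ \oo --> (0 : R).
Proof.
move=> L1 Hpsi Hsc _.
set k := size prefix.
pose X l n := transformer psi sc l (prefix ++ nseq n v).
pose A l m := nth 0 (X l m.+1) (k + m)%N.
pose W l := nth 0 (transformer psi sc l [:: v]) 0.
have sizeX l n : size (X l n) = (k + n)%N.
  by rewrite /X size_transformer size_cat size_nseq.
have inp n j : (j < k + n)%N ->
    nth 0 (prefix ++ nseq n v) j = if (j < k)%N then nth 0 prefix j else v.
  move=> hj; rewrite nth_cat -/k; case: ifP => // hjk.
  rewrite nth_nseq; case: ifP => // /negbT; rewrite -leqNgt; lia.
have XA l n p : (k <= p < k + n)%N -> nth 0 (X l n) p = A l (p - k)%N.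
  move=> /andP[h1 h2]; rewrite /A /X (subnKC h1).
  apply: (@transformer_causal _ _ _ _ _ _ _ p.+1) => //;
    rewrite ?size_cat ?size_nseq -/k; try lia.
  move=> j hj; rewrite !inp //; lia.
have X0 l n p : (p < k)%N -> nth 0 (X l n) p = nth 0 (X l 0) p.
  move=> hp; rewrite /X.
  apply: (@transformer_causal _ _ _ _ _ _ _ k) => //;
    rewrite ?size_cat ?size_nseq -/k; try lia.
  move=> j hj; rewrite !inp //; lia.
have main : forall l, (l <= L)%N -> cv (A l) (W l).
  elim=> [_ i|l IH hl].
    have -> : (fun n => A 0%N n 0 i) = (fun=> W 0%N 0 i).
      apply: funext => m; rewrite /A /X (inp m.+1); last by lia.
      by case: ifP => //; lia.
    exact: cvg_cst.
  have IHl := IH (ltnW hl).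
  pose Z m := zof (sc l) (X l m.+1) (k + m)%N.
  have AZ m : A l.+1 m = psi l (Z m) + Z m.
    rewrite /A /X /= nth_tlayer // -/(X l m.+1) sizeX; lia.
  have WZ : W l.+1 = psi l (W l + W l) + (W l + W l) := W_step psi sc l v.
  suff hZ : cv Z (W l + W l).
    move=> i; rewrite WZ.
    have h1 := cv_lip _ _ _ (Hpsi l hl) hZ i.
    have h2 := hZ i.
    have -> : (fun m => A l.+1 m 0 i) = (fun m => psi l (Z m) 0 i + Z m 0 i).
      by apply: funext => m; rewrite AZ mxE.
    rewrite mxE; exact: cvgD h1 h2.
  move=> i.
  have [dl Hdl] := Hsc l hl.
  pose E := expR dl.
  pose b j := `|A l j 0 i - W l 0 i|.
  pose K := \sum_(j < k) `|nth 0 (X l 0) j 0 i - W l 0 i|.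
  pose e m (j : nat) := expR (sc l (k+m)%N.+1 j.+1 (nth 0 (X l m.+1) (k+m)%N) (nth 0 (X l m.+1) j)).
  pose att m := \sum_(j < (k+m)%N.+1) (e m j / \sum_(j' < (k+m)%N.+1) e m j') * nth 0 (X l m.+1) j 0 i.
  have Zi m : Z m 0 i = att m + A l m 0 i.
    rewrite /Z /zof mxE summxE; congr (_ + _); apply: eq_bigr => j _; by rewrite mxE.
  have sumid m : \sum_(j < (k+m)%N.+1) `|nth 0 (X l m.+1) j 0 i - W l 0 i| = K + \sum_(j < m.+1) b j.
    rewrite -(big_mkord xpredT (fun j => `|nth 0 (X l m.+1) j 0 i - W l 0 i|)).
    rewrite -addnS (big_cat_nat (leq0n k) (leq_addr _ _)) /=.
    congr (_ + _).
      rewrite /K big_mkord; apply: eq_bigr => j _.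
      by rewrite X0.
    have := big_addn 0 (k + m.+1)%N k xpredT (fun j => `|nth 0 (X l m.+1) j 0 i - W l 0 i|).
    rewrite add0n => ->; rewrite addKn big_mkord; apply: eq_bigr => j _.
    rewrite XA ?addnK //; have := ltn_ord j; lia.
  have bound m : `|att m - W l 0 i| <= E / (k+m)%N.+1%:R * (K + \sum_(j < m.+1) b j).
    rewrite -sumid.
    apply: (@att_bound R (k+m)%N.+1 (fun j => e m j) (fun j => nth 0 (X l m.+1) j 0 i)) => //.
      by move=> j; exact: expR_gt0.
    move=> j j'; rewrite /e /E -expRD ler_expR.
    have := Hdl (fun p => nth 0 (X l m.+1) p.-1) (k+m)%N.+1 j.+1 j'.+1.
    rewrite /= !ltn_ord => /(_ isT isT) hd.
    have := le_trans (ler_norm _) hd; lra.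
  have hb : (fun j => b j) @ \oo --> (0:R) := coord_to0 _ _ i IHl.
  have hc := cesaro hb.
  have hatt : (fun m => att m) @ \oo --> W l 0 i.
    apply/(subr_cvg0 att); apply/(norm_cvg0P (fun m => att m - W l 0 i)).
    apply: (@squeeze_cvgr _ _ _ _ (fun=> 0) (fun m => E * K * harmonic m + E * arithmetic_mean b m)).
    - apply: nearW => m; apply/andP; split => //.
      apply: le_trans (bound m) _.
      rewrite /arithmetic_mean /harmonic /series /= big_mkord.
      have E0 : 0 <= E := expR_ge0 dl.
      have K0 : 0 <= K by apply: sumr_ge0.
      have S0 : 0 <= \sum_(j < m.+1) b j by apply: sumr_ge0 => j _; rewrite /b.
      have hN : ((k+m)%N.+1%:R)^-1 <= (m.+1%:R : R)^-1.
        by rewrite lef_pV2 ?posrE ?ltr0n // ler_nat; lia.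
      rewrite mulrDr; apply: lerD.
        by rewrite mulrAC; apply: ler_wpM2l => //; apply: mulr_ge0.
      by rewrite -mulrA; apply: ler_wpM2l => //; apply: ler_wpM2r.
    - exact: cvg_cst.
    - have e0 : (0:R) = E * K * 0 + E * 0 by rewrite !mulr0 addr0.
      rewrite [X in _ --> X]e0; apply: cvgD; apply: cvgM => //; [exact: cvg_cst | exact: cvg_harmonic | exact: cvg_cst].
  have -> : (fun m => Z m 0 i) = (fun m => att m + A l m 0 i) by apply: funext => m; exact: Zi.
  rewrite mxE; exact: cvgD hatt (IHl i).
have h := cv_enorm _ _ (main L (leqnn L)).
rewrite -cvg_shiftS.
suff -> : (fun n => enorm (nth 0 (transformer psi sc L (prefix ++ nseq n.+1 v)) (n.+1 + k)%N.-1
            - nth 0 (transformer psi sc L [:: v]) 0)) = (fun n => enorm (A L n - W L)) by exact: h.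
by apply: funext => n; rewrite addSn /= addnC.
Qed.
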